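(* Let $\mathcal{T}_R$ be the class of all finite reflexive tournaments. For any finite set $\{O_1,\dots,O_k\}\subseteq\mathcal{T}_R$, the class $\mathrm{Av}(O_1,\dots,O_k)=\{T\in\mathcal{T}_R: O_i\not\preceq T \text{ for all } i\}$, with respect to the homomorphic image ordering $\preceq$, is not well quasi-ordered.
   Context: A reflexive tournament is a digraph $T$ (set with binary relation $E(T)$) in which every loop $(x,x)$ is an edge and, for any two distinct $x,y$, exactly one of $(x,y),(y,x)$ is an edge. A homomorphism maps edges to edges. Homomorphic image ordering: $A\preceq B$ iff there is a surjective homomorphism $B\to A$. Well quasi-ordered means no infinite strictly decreasing sequence and no infinite antichain; tournaments considered up to isomorphism. *)

(* Defs.v *)
From mathcomp Require Import all_boot.
From Stdlib Require List.
Set Implicit Arguments. Unset Strict Implicit. Unset Printing Implicit Defensive.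

Record rtour := RTour {
  rt_n : nat;
  rt_E : rel 'I_rt_n;
  rt_refl : forall x, rt_E x x;
  rt_tour : forall x y, x != y -> rt_E x y (+) rt_E y x
}.

Definition is_hom (A B : rtour) (f : 'I_(rt_n A) -> 'I_(rt_n B)) : Prop :=
  forall x y, @rt_E A x y -> @rt_E B (f x) (f y).

Definition hom_image (A B : rtour) : Prop :=
  exists f : 'I_(rt_n B) -> 'I_(rt_n A),
    @is_hom B A f /\ forall y, exists x, f x = y.

Definition Av (O : seq rtour) (T : rtour) : Prop :=
  forall Oi, List.In Oi O -> ~ hom_image Oi T.

Definition wqo_on (P : rtour -> Prop) (le : rtour -> rtour -> Prop) : Prop :=
  (~ exists s : nat -> rtour, (forall n, P (s n)) /\
       forall n, le (s n.+1) (s n) /\ ~ le (s n) (s n.+1)) /\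
  (~ exists s : nat -> rtour, (forall n, P (s n)) /\
       forall i j, i <> j -> ~ le (s i) (s j)).

(* Main.v *)
Require Import Defs.
From mathcomp Require Import all_boot zify.
From Stdlib Require Import Classical.
Set Implicit Arguments. Unset Strict Implicit.

Definition Ep (i j : nat) : bool := (i == j) || (if i < j then j != i.+1 else i == j.+1).

Lemma Ep_refl m (x : 'I_(m.+4.+1)) : Ep x x.
Proof. by rewrite /Ep eqxx. Qed.

Lemma Ep_tour_nat a b : a <> b -> Ep a b (+) Ep b a.
Proof.
move=> nab; rewrite /Ep.
case: (ltnP a b) => h1; case: (ltnP b a) => h2;
 case: (a =P b) => e1; case: (b =P a) => e2; case: (b =P a.+1) => e3; case: (a =P b.+1) => e4; simpl; lia.
Qed.

Lemma Ep_tour m (x y : 'I_(m.+4.+1)) : x != y -> Ep x y (+) Ep y x.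
Proof.
move=> /eqP nxy; apply: Ep_tour_nat => h; apply: nxy; exact: val_inj.
Qed.

Definition T (m : nat) : rtour := @RTour m.+4.+1 (fun x y => Ep x y) (@Ep_refl m) (@Ep_tour m).

Section Key.
Variables (m : nat) (B : rtour) (f : 'I_(m.+4.+1) -> 'I_(rt_n B)).
Hypothesis hf : @is_hom (T m) B f.
Let F (k : nat) := f (inord k).

Lemma between x y z : x < m.+4.+1 -> y < m.+4.+1 -> z < m.+4.+1 ->
  Ep x y -> Ep y z -> F x = F z -> F y = F x.
Proof.
move=> hx hy hz e1 e2 e3; apply/eqP; apply/negPn/negP => ne.
have h1 : rt_E (f (inord x)) (f (inord y)).
  by apply: hf => /=; rewrite !inordK.
have h2 : rt_E (f (inord y)) (f (inord z)).
  by apply: hf => /=; rewrite !inordK.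
have := rt_tour ne; rewrite /F in e3; rewrite -e3 in h2.
by rewrite /F h1 h2.
Qed.

Lemma allequal a b : a < b -> b < m.+4.+1 -> F a = F b -> forall k, k < m.+4.+1 -> F k = F a.
Proof.
move=> ab bn e.
have down : forall d, d <= a -> F (a - d) = F a.
  elim=> [|d IH] hd; first by rewrite subn0.
  have := @between (a - d) (a - d.+1) b; rewrite /Ep.
  move=> H; have IH' := IH (ltnW hd); rewrite -IH'.
  apply: H; try lia.
  - have -> : (a - d < a - d.+1) = false by lia. apply/orP; right; apply/eqP; lia.
  - have -> : (a - d.+1 < b) = true by lia. apply/orP; right; apply/eqP; lia.
  - by rewrite IH'.
have up : forall d, b + d < m.+4.+1 -> F (b + d) = F a.
  elim=> [|d IH] hd; first by rewrite addn0.
  have := @between a (b + d.+1) (b + d); rewrite /Ep.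
  move=> H; have IH' : F (b + d) = F a by apply: IH; lia.
  apply: H; try lia.
  - have -> : (a < b + d.+1) = true by lia. apply/orP; right; apply/eqP; lia.
  - have -> : (b + d.+1 < b + d) = false by lia. apply/orP; right; apply/eqP; lia.
  - by rewrite IH'.
have F0 : F 0 = F a by have := down a (leqnn a); rewrite subnn.
have Fn : F (m.+4) = F a by have := up (m.+4 - b); rewrite subnKC //; apply; lia.
have F2 : F 2 = F 0.
  apply: (@between 0 2 m.+4) => //; try lia. by rewrite Fn.
have F1 : F 1 = F 2 by apply: (@between 2 1 0).
have all1 : forall k, 1 <= k -> k < m.+4.+1 -> F k = F 0.
  elim=> [//|k IH] h1 h2.
  case: (posnP k) => [->|kp]; first by rewrite F1.
  have := @between 0 k.+1 k; rewrite /Ep => H.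
  apply: H; try lia.
  - have -> : (0 < k.+1) = true by lia. apply/orP; right; apply/eqP; lia.
  - have -> : (k.+1 < k) = false by lia. apply/orP; right; apply/eqP; lia.
  - by rewrite IH //; lia.
move=> k hk; case: (posnP k) => [->|kp]; first by [].
by rewrite all1 //.
Qed.

Lemma inj_or_const : injective f \/ forall x, f x = f ord0.
Proof.
case: (classic (exists x y, x <> y /\ f x = f y)) => [[x [y [nxy e]]]|H]; [right|left].
  have nxy' : (x:nat) <> y by move=> h; apply: nxy; apply: val_inj.
  have FF : forall z : 'I_(m.+4.+1), F z = f z by move=> z; rewrite /F inord_val.
  have key : forall a b : 'I_(m.+4.+1), (a:nat) < b -> f a = f b -> forall z : 'I_(m.+4.+1), f z = f ord0.
    move=> a b ab e' z; rewrite -!FF.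
    have e2 : F a = F b by rewrite !FF.
    have Hall := @allequal a b ab (ltn_ord b) e2.
    have F0 : F 0 = f ord0 by rewrite /F; congr f; apply: val_inj; rewrite /= inordK.
    by rewrite Hall // [in RHS]Hall.
  case: (ltnP x y) => h; first exact: key h e.
  apply: (key y x) => //; lia.
move=> x y e; apply: NNPP => ne; apply: H; by exists x, y.
Qed.
End Key.

Lemma image_size m (B : rtour) : hom_image B (T m) -> rt_n B = 1 \/ rt_n B = m.+4.+1.
Proof.
move=> [f [hf sf]].
case: (inj_or_const hf) => [inj|cst]; [right|left].
- apply/eqP; rewrite eqn_leq; apply/andP; split; last first.
    by have := @leq_card _ _ f inj; rewrite !card_ord.
  have ex y : exists x, f x == y by case: (sf y) => x <-; exists x.
  pose g y := xchoose (ex y).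
  have ginj : injective g.
    move=> y1 y2 e; have h1 := xchooseP (ex y1); have h2 := xchooseP (ex y2).
    by rewrite -(eqP h1) -(eqP h2); rewrite /g in e; rewrite e.
  by have := @leq_card _ _ g ginj; rewrite !card_ord.
- have pos : 0 < rt_n B by have := ltn_ord (f (@ord0 m.+4)); lia.
  apply/eqP; rewrite eqn_leq pos andbT; apply: contraT; rewrite -ltnNge => h1.
  case: (sf (Ordinal pos)) => x1 e1.
  case: (sf (Ordinal h1)) => x2 e2.
  by move: e1 e2; rewrite !cst => -> /(congr1 val).
Qed.

Lemma In_size (O : seq rtour) Oi : List.In Oi O -> rt_n Oi <= sumn (map (@rt_n) O).
Proof.
elim: O => [//|a O IH] /= [->|h]; first exact: leq_addr.
by apply: leq_trans (IH h) _; exact: leq_addl.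
Qed.

Theorem theorem5p2 (O : seq rtour) :
  (forall Oi, List.In Oi O -> rt_n Oi <> 1) ->
  ~ wqo_on (Av O) hom_image.
Proof.
move=> hO [_ H]; apply: H.
pose N := sumn (map (@rt_n) O).
exists (fun k => T (N + k)); split.
- move=> k Oi hin him.
  have := In_size hin; rewrite -/N.
  case: (image_size him) => e; first by exfalso; exact: (hO Oi hin e).
  rewrite e; lia.
- move=> i j nij him; case: (image_size him) => /= e; lia.
Qed.
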